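(* Let $Y$ be a space and $\mathcal X=(X_i)_{i\in I_Y}$ a family of nonempty spaces. The zoom space $Z(Y,\mathcal X)$ is compact (resp. $\sigma$-compact, resp. $\mathcal K$-analytic) if and only if $Y$ and every $X_i$, $i\in I_Y$, are compact (resp. $\sigma$-compact, resp. $\mathcal K$-analytic).
   Context: All spaces are Tychonoff. For a space $Y$, $I_Y$ is its set of isolated points and $Y'=Y\setminus I_Y$. The zoom space $Z(Y,\mathcal X)$ is the disjoint union $Y'\cup\bigcup_{i\in I_Y}X_i$ with the topology whose basis consists of all open subsets of the $X_i$ and all sets $V_U=(U\setminus I_Y)\cup\bigcup\{X_i:i\in U\cap I_Y\}$ with $U$ open in $Y$. A space is $\mathcal K$-analytic if it is of the form $\bigcup_{\sigma\in\omega^\omega}\bigcap_{k\in\omega}F_{\sigma(0),\dots,\sigma(k)}$ for closed subsets $F_{n_0,\dots,n_k}$ of some compact space. *)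

(* Defs.v *)
From Stdlib Require Import Reals List Eqdep.
Import ListNotations.
Open Scope R_scope.

Record space := Space {
  pt :> Type;
  op : (pt -> Prop) -> Prop;
  op_full : op (fun _ => True);
  op_inter : forall U V, op U -> op V -> op (fun x => U x /\ V x);
  op_union : forall F : (pt -> Prop) -> Prop,
      (forall U, F U -> op U) -> op (fun x => exists U, F U /\ U x)
}.

Definition closed (X : space) (C : X -> Prop) : Prop := op X (fun x => ~ C x).

Definition continuous (X Y : space) (f : X -> Y) : Prop :=
  forall V, op Y V -> op X (fun x => V (f x)).

(* continuity into the real line (open intervals form a base) *)
Definition continuous_R (X : space) (f : X -> R) : Prop :=
  forall a b, op X (fun x => a < f x < b).

Definition tychonoff (X : space) : Prop :=
  (forall x : X, closed X (fun z => z = x)) /\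
  (forall (C : X -> Prop) (x : X), closed X C -> ~ C x ->
     exists f : X -> R, continuous_R X f /\ f x = 0 /\
       (forall z, C z -> f z = 1) /\ (forall z, 0 <= f z <= 1)).

Definition compact_set (X : space) (A : X -> Prop) : Prop :=
  forall F : (X -> Prop) -> Prop,
    (forall U, F U -> op X U) ->
    (forall x, A x -> exists U, F U /\ U x) ->
    exists l : list (X -> Prop),
      (forall U, In U l -> F U) /\ (forall x, A x -> exists U, In U l /\ U x).

Definition compact_space (X : space) : Prop := compact_set X (fun _ => True).

Definition sigma_compact (X : space) : Prop :=
  exists K : nat -> X -> Prop,
    (forall n, compact_set X (K n)) /\ (forall x, exists n, K n x).

Definition embedding (X Y : space) (e : X -> Y) : Prop :=
  (forall x y, e x = e y -> x = y) /\ continuous X Y e /\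
  (forall U, op X U -> exists V, op Y V /\ forall x, U x <-> V (e x)).

Definition K_analytic (X : space) : Prop :=
  exists (K : space) (e : X -> K) (F : list nat -> K -> Prop),
    tychonoff K /\ compact_space K /\ embedding X K e /\
    (forall s, closed K (F s)) /\
    (forall z : K, (exists x, e x = z) <->
       exists sigma : nat -> nat, forall k : nat, F (map sigma (seq 0 (S k))) z).

Definition isolated (Y : space) (y : Y) : Prop := op Y (fun z => z = y).
Definition Iso (Y : space) : Type := {y : Y | isolated Y y}.
Definition NIso (Y : space) : Type := {y : Y | ~ isolated Y y}.

(* Zoom space Z(Y, X) : carrier Y' ⊔ ⨆_{i ∈ I_Y} X_i *)
Definition zcar (Y : space) (X : Iso Y -> space) : Type :=
  (NIso Y + {i : Iso Y & pt (X i)})%type.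

(* basic set V_U = (U \ I_Y) ∪ ⋃{X_i : i ∈ U ∩ I_Y} *)
Definition VU (Y : space) (X : Iso Y -> space) (U : Y -> Prop) : zcar Y X -> Prop :=
  fun p => match p with
           | inl y => U (proj1_sig y)
           | inr s => U (proj1_sig (projT1 s))
           end.

Definition WB (Y : space) (X : Iso Y -> space) (i : Iso Y) (W : X i -> Prop)
  : zcar Y X -> Prop :=
  fun p => exists x, W x /\ p = inr (existT (fun j => pt (X j)) i x).

Definition zopen (Y : space) (X : Iso Y -> space) (O : zcar Y X -> Prop) : Prop :=
  forall p, O p ->
    (exists U, op Y U /\ VU Y X U p /\ (forall q, VU Y X U q -> O q)) \/
    (exists i W, op (X i) W /\ WB Y X i W p /\ (forall q, WB Y X i W q -> O q)).

Lemma zopen_full Y X : zopen Y X (fun _ => True).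
Proof.
  intros p _. left. exists (fun _ => True). split; [apply op_full|].
  split; [destruct p; exact I | intros; exact I].
Qed.

Lemma zopen_union Y X (F : (zcar Y X -> Prop) -> Prop) :
  (forall U, F U -> zopen Y X U) -> zopen Y X (fun x => exists U, F U /\ U x).
Proof.
  intros HF p [O [FO Op]].
  destruct (HF O FO p Op) as [[U [HU [Hp Hs]]] | [i [W [HW [Hp Hs]]]]].
  - left. exists U. repeat split; auto. intros q Hq. exists O; auto.
  - right. exists i, W. repeat split; auto. intros q Hq. exists O; auto.
Qed.

Lemma zopen_inter Y X (O1 O2 : zcar Y X -> Prop) :
  zopen Y X O1 -> zopen Y X O2 -> zopen Y X (fun x => O1 x /\ O2 x).
Proof.
  intros H1 H2 p [P1 P2].
  destruct (H1 p P1) as [[U [HU [Hp Hs]]] | [i [W [HW [Hp Hs]]]]],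
    (H2 p P2) as [[U' [HU' [Hp' Hs']]] | [i' [W' [HW' [Hp' Hs']]]]].
  - left. exists (fun y => U y /\ U' y). split; [apply op_inter; auto|].
    split; [destruct p; simpl in *; auto|].
    intros q Hq; split; [apply Hs|apply Hs']; destruct q; simpl in *; tauto.
  - right. exists i', W'. split; auto. split; auto.
    intros q Hq. split; auto. apply Hs.
    destruct Hp' as [x [_ ->]]. destruct Hq as [z [_ ->]]. simpl in *. exact Hp.
  - right. exists i, W. split; auto. split; auto.
    intros q Hq. split; auto. apply Hs'.
    destruct Hp as [x [_ ->]]. destruct Hq as [z [_ ->]]. simpl in *. exact Hp'.
  - destruct Hp as [x [Wx ->]]. destruct Hp' as [x' [Wx' E]].
    inversion E as [E']. subst i'.
    injection E as E. apply inj_pair2 in E. subst x'.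
    right. exists i, (fun z => W z /\ W' z). split; [apply op_inter; auto|].
    split; [exists x; auto|].
    intros q [z [[Wz Wz'] ->]]. split; [apply Hs | apply Hs']; exists z; auto.
Qed.

Definition zoom (Y : space) (X : Iso Y -> space) : space :=
  Space (zcar Y X) (zopen Y X) (zopen_full Y X) (zopen_inter Y X) (zopen_union Y X).

(* Main.v *)
Require Import Defs.
From Stdlib Require Import Reals List Classical ClassicalEpsilon FunctionalExtensionality PropExtensionality ProofIrrelevance Eqdep Cantor.
Import ListNotations.


Lemma pred_ext {T : Type} (U V : T -> Prop) : (forall x, U x <-> V x) -> U = V.
Proof. intros H; apply functional_extensionality; intros x; apply propositional_extensionality; auto. Qed.

Lemma op_ext (X : space) (U V : X -> Prop) : op X U -> (forall x, U x <-> V x) -> op X V.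
Proof. intros H E; rewrite <- (pred_ext U V E); exact H. Qed.

Lemma op_local (X : space) (U : X -> Prop) :
  (forall x, U x -> exists V, op X V /\ V x /\ forall y, V y -> U y) -> op X U.
Proof.
  intros H.
  apply op_ext with (U := fun x => exists V, (op X V /\ forall y, V y -> U y) /\ V x).
  - apply op_union. intros V [HV _]; exact HV.
  - intros x; split.
    + intros [V [[_ HV] Vx]]; auto.
    + intros Ux; destruct (H x Ux) as [V [HV [Vx HVU]]]; exists V; auto.
Qed.

Lemma op_or (X : space) (U V : X -> Prop) : op X U -> op X V -> op X (fun x => U x \/ V x).
Proof.
  intros HU HV. apply op_local. intros x [Ux|Vx].
  - exists U; split; auto.
  - exists V; split; auto.
Qed.

Lemma closed_compl (X : space) (U : X -> Prop) : op X U -> closed X (fun x => ~ U x).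
Proof. intros H; unfold closed; apply op_ext with U; auto. intros x; split; [tauto| apply NNPP]. Qed.

Lemma closed_op (X : space) (C : X -> Prop) : closed X C -> op X (fun x => ~ C x).
Proof. auto. Qed.

Lemma L_pull (A B : Type) (P : A -> Prop) (R : A -> B -> Prop) (l : list A) :
  (forall a, In a l -> P a -> exists b, R a b) ->
  exists l', (forall b, In b l' -> exists a, In a l /\ P a /\ R a b) /\
             (forall a, In a l -> P a -> exists b, In b l' /\ R a b).
Proof.
  induction l as [|a l IH]; intros H.
  - exists []; split; [intros b []| intros a []].
  - destruct IH as [l' [H1 H2]].
    { intros a' Ha'; apply H; right; auto. }
    destruct (classic (P a)) as [Pa|nPa].
    + destruct (H a (or_introl eq_refl) Pa) as [b Rb].
      exists (b :: l'); split.
      * intros b' [<-|Hb']; [exists a; simpl; auto|].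
        destruct (H1 b' Hb') as [a' [? [? ?]]]; exists a'; simpl; auto.
      * intros a' [<-|Ha'] Pa'; [exists b; simpl; auto|].
        destruct (H2 a' Ha' Pa') as [b' [? ?]]; exists b'; simpl; auto.
    + exists l'; split.
      * intros b' Hb'; destruct (H1 b' Hb') as [a' [? [? ?]]]; exists a'; simpl; auto.
      * intros a' [<-|Ha'] Pa'; [contradiction|].
        destruct (H2 a' Ha' Pa') as [b' [? ?]]; exists b'; simpl; auto.
Qed.

Lemma compact_ext (X : space) (A A' : X -> Prop) :
  (forall x, A x <-> A' x) -> compact_set X A -> compact_set X A'.
Proof. intros E H; rewrite <- (pred_ext _ _ E); exact H. Qed.

Definition image {A B : Type} (e : A -> B) (b : B) : Prop := exists a, e a = b.

Lemma emb_cpt (A Z : space) (e : A -> Z) (C : Z -> Prop) :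
  embedding A Z e -> closed Z (image e) -> compact_set Z C ->
  compact_set A (fun a => C (e a)).
Proof.
  intros [Hinj [Hcont Htr]] Hcl HC F HF Hcov.
  set (F' := fun V : Z -> Prop => op Z V /\ exists U, F U /\ forall a, U a <-> V (e a)).
  set (G := fun V : Z -> Prop => F' V \/ V = (fun z => ~ image e z)).
  destruct (HC G) as [l [Hl1 Hl2]].
  - intros V [[HV _]| ->]; auto.
  - intros z Cz. destruct (classic (image e z)) as [[a <-]|nI].
    + destruct (Hcov a Cz) as [U [FU Ua]].
      destruct (Htr U (HF U FU)) as [V [HV HUV]].
      exists V; split; [left; split; auto; exists U; auto| apply HUV; auto].
    + exists (fun z => ~ image e z); split; [right; auto| auto].
  - destruct (L_pull _ _ F' (fun V U => F U /\ forall a, U a <-> V (e a)) l) as [l' [H1 H2]].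
    + intros V _ [_ [U HU]]; exists U; auto.
    + exists l'; split.
      * intros U HU; destruct (H1 U HU) as [V [_ [_ [FU _]]]]; auto.
      * intros a Ca. destruct (Hl2 (e a) Ca) as [V [InV Ve]].
        destruct (Hl1 V InV) as [F'V| ->].
        -- destruct (H2 V InV F'V) as [U [InU [_ HUV]]]. exists U; split; auto; apply HUV; auto.
        -- exfalso; apply Ve; exists a; auto.
Qed.

Lemma emb_compose (A B C : space) (f : A -> B) (g : B -> C) :
  embedding A B f -> embedding B C g -> embedding A C (fun a => g (f a)).
Proof.
  intros [i1 [c1 t1]] [i2 [c2 t2]]; split; [|split].
  - intros x y E; apply i1, i2, E.
  - intros V HV; apply (c1 _ (c2 _ HV)).
  - intros U HU. destruct (t1 U HU) as [V [HV emb_cpt']]. destruct (t2 V HV) as [W [HW emb_Kan']].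
    exists W; split; auto; intros x; rewrite emb_cpt'; apply emb_Kan'.
Qed.

Lemma emb_Kan (A Z : space) (e : A -> Z) :
  embedding A Z e -> closed Z (image e) -> K_analytic Z -> K_analytic A.
Proof.
  intros He Hcl [K [eZ [F [HT [HK [HeZ [HF HS]]]]]]].
  pose proof HeZ as [iZ [cZ tZ]].
  destruct (tZ _ Hcl) as [V [HV HVe]].
  exists K, (fun a => eZ (e a)), (fun s k => F s k /\ ~ V k).
  split; [auto|split; [auto|split; [eapply emb_compose; eauto|split]]].
  - intros s. unfold closed. apply op_ext with (fun k => ~ F s k \/ V k).
    + apply op_or; [apply HF|exact HV].
    + intros k; split; [tauto|]. intros H. destruct (classic (V k)) as [Hv|Hv]; [right; exact Hv|]. left; intros Fk; apply H; auto.
  - intros z; split.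
    + intros [a <-]. destruct (proj1 (HS (eZ (e a))) (ex_intro _ (e a) eq_refl)) as [sg Hsg].
      exists sg; intros k; split; auto. intros Vz. apply HVe in Vz. apply Vz; exists a; auto.
    + intros [sg Hsg]. destruct (proj2 (HS z)) as [w <-].
      { exists sg; intros k; apply Hsg. }
      destruct (Hsg 0%nat) as [_ nV].
      destruct (classic (image e w)) as [[a <-]|nI]; [exists a; auto|].
      exfalso; apply nV, HVe, nI.
Qed.

Section Sub.
Variable K : space.
Variable P : K -> Prop.
Definition scar := {k : K | P k}.
Definition sop (U : scar -> Prop) : Prop := exists V, op K V /\ forall p, U p <-> V (proj1_sig p).
Lemma sop_full : sop (fun _ => True).
Proof. exists (fun _ => True); split; [apply op_full| tauto]. Qed.
Lemma sop_inter U V : sop U -> sop V -> sop (fun x => U x /\ V x).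
Proof.
  intros [U' [HU EU]] [V' [HV EV]]; exists (fun k => U' k /\ V' k); split; [apply op_inter; auto|].
  intros p; rewrite EU, EV; tauto.
Qed.
Lemma sop_union (F : (scar -> Prop) -> Prop) :
  (forall U, F U -> sop U) -> sop (fun x => exists U, F U /\ U x).
Proof.
  intros HF.
  exists (fun k => exists V', (op K V' /\ exists U, F U /\ forall p, U p <-> V' (proj1_sig p)) /\ V' k).
  split.
  - apply op_union. intros V' [H _]; auto.
  - intros p; split.
    + intros [U [FU Up]]. destruct (HF U FU) as [V' [HV' E]].
      exists V'; split; [split; auto; exists U; auto| apply E; auto].
    + intros [V' [[_ [U [FU E]]] Vp]]. exists U; split; auto; apply E; auto.
Qed.
Definition subsp : space := Space scar sop sop_full sop_inter sop_union.
End Sub.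

Lemma sig_eq {T : Type} {P : T -> Prop} (p q : {x : T | P x}) : proj1_sig p = proj1_sig q -> p = q.
Proof. destruct p, q; simpl; intros ->; f_equal; apply proof_irrelevance. Qed.

Lemma sub_embedding (K : space) (P : K -> Prop) :
  embedding (subsp K P) K (fun p => proj1_sig p).
Proof.
  split; [|split].
  - intros x y; apply sig_eq.
  - intros V HV; exists V; split; auto; tauto.
  - intros U [V [HV E]]; exists V; auto.
Qed.

Lemma sub_compact (K : space) (P : K -> Prop) :
  compact_space K -> closed K P -> compact_space (subsp K P).
Proof.
  intros HK HP. unfold compact_space.
  apply compact_ext with (fun p : subsp K P => (fun _ : K => True) (proj1_sig p)); [tauto|].
  apply (emb_cpt (subsp K P) K (fun p => proj1_sig p) (fun _ => True)); auto. apply sub_embedding.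
  unfold closed; apply op_ext with (fun k => ~ P k); auto.
  intros k; split; intros H1 H2; apply H1.
  - destruct H2 as [[k' Pk] <-]; auto.
  - exists (exist _ k H2); auto.
Qed.

Lemma sub_tychonoff (K : space) (P : K -> Prop) :
  tychonoff K -> tychonoff (subsp K P).
Proof.
  intros [T1 CR]; split.
  - intros x. exists (fun k => ~ k = proj1_sig x); split; [apply T1|].
    intros p; split; intros H E; apply H; [apply sig_eq; auto| subst; auto].
  - intros C x [V [HV E]] nCx.
    assert (Vx : V (proj1_sig x)) by (apply E; auto).
    destruct (CR (fun k => ~ V k) (proj1_sig x)) as [f [cf [f0 [f1 f01]]]].
    + apply closed_compl; auto.
    + tauto.
    + exists (fun p => f (proj1_sig p)); split; [|split; [auto|split]].
      * intros a b. exists (fun k => a < f k < b); split; [apply cf| tauto].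
      * intros z Cz; apply f1; intros Vz; apply E in Vz; auto.
      * intros z; apply f01.
Qed.

Lemma transfer_local (A Z : space) (e : A -> Z) (U : A -> Prop) :
  (forall a, U a -> exists O, op Z O /\ O (e a) /\ forall a', O (e a') -> U a') ->
  exists V, op Z V /\ forall a, U a <-> V (e a).
Proof.
  intros H. exists (fun z => exists O, (op Z O /\ forall a', O (e a') -> U a') /\ O z); split.
  - apply op_union. intros O [HO _]; auto.
  - intros a; split.
    + intros Ua; destruct (H a Ua) as [O [HO [Oa HOs]]]; exists O; auto.
    + intros [O [[_ HOs] Oa]]; auto.
Qed.


Section GZ.
Variable B : space.
Variable N : Type.
Variable n : N -> B.
Variable Ix : Type.
Variable j : Ix -> B.
Variable X : Ix -> space.

Definition gcar : Type := (N + {i : Ix & pt (X i)})%type.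
Definition gin (i : Ix) (x : X i) : gcar := inr (existT (fun k => pt (X k)) i x).
Definition gpi (p : gcar) : B := match p with inl y => n y | inr s => j (projT1 s) end.
Definition gVU (U : B -> Prop) : gcar -> Prop :=
  fun p => match p with inl y => U (n y) | inr s => U (j (projT1 s)) end.
Definition gWB (i : Ix) (W : X i -> Prop) : gcar -> Prop :=
  fun p => exists x, W x /\ p = inr (existT (fun k => pt (X k)) i x).
Definition gopen (O : gcar -> Prop) : Prop :=
  forall p, O p ->
    (exists U, op B U /\ gVU U p /\ (forall q, gVU U q -> O q)) \/
    (exists i W, op (X i) W /\ gWB i W p /\ (forall q, gWB i W q -> O q)).

Lemma gopen_full : gopen (fun _ => True).
Proof.
  intros p _. left. exists (fun _ => True). split; [apply op_full|].
  split; [destruct p; exact I | intros; exact I].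
Qed.

Lemma gopen_union (F : (gcar -> Prop) -> Prop) :
  (forall U, F U -> gopen U) -> gopen (fun x => exists U, F U /\ U x).
Proof.
  intros HF p [O [FO Op]].
  destruct (HF O FO p Op) as [[U [HU [Hp Hs]]] | [i [W [HW [Hp Hs]]]]].
  - left. exists U. repeat split; auto. intros q Hq. exists O; auto.
  - right. exists i, W. repeat split; auto. intros q Hq. exists O; auto.
Qed.

Lemma gopen_inter (O1 O2 : gcar -> Prop) :
  gopen O1 -> gopen O2 -> gopen (fun x => O1 x /\ O2 x).
Proof.
  intros H1 H2 p [P1 P2].
  destruct (H1 p P1) as [[U [HU [Hp Hs]]] | [i [W [HW [Hp Hs]]]]],
    (H2 p P2) as [[U' [HU' [Hp' Hs']]] | [i' [W' [HW' [Hp' Hs']]]]].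
  - left. exists (fun y => U y /\ U' y). split; [apply op_inter; auto|].
    split; [destruct p; simpl in *; auto|].
    intros q Hq; split; [apply Hs|apply Hs']; destruct q; simpl in *; tauto.
  - right. exists i', W'. split; auto. split; auto.
    intros q Hq. split; auto. apply Hs.
    destruct Hp' as [x [_ ->]]. destruct Hq as [z [_ ->]]. simpl in *. exact Hp.
  - right. exists i, W. split; auto. split; auto.
    intros q Hq. split; auto. apply Hs'.
    destruct Hp as [x [_ ->]]. destruct Hq as [z [_ ->]]. simpl in *. exact Hp'.
  - destruct Hp as [x [Wx ->]]. destruct Hp' as [x' [Wx' E]].
    inversion E as [E']. subst i'.
    injection E as E. apply inj_pair2 in E. subst x'.
    right. exists i, (fun z => W z /\ W' z). split; [apply op_inter; auto|].
    split; [exists x; auto|].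
    intros q [z [[Wz Wz'] ->]]. split; [apply Hs | apply Hs']; exists z; auto.
Qed.

Definition gzoom : space := Space gcar gopen gopen_full gopen_inter gopen_union.

Lemma gin_inj i x x' : gin i x = gin i x' -> x = x'.
Proof. unfold gin; intros E; injection E as E; apply inj_pair2 in E; auto. Qed.

Lemma op_gVU U : op B U -> op gzoom (gVU U).
Proof. intros HU p Hp; left; exists U; auto. Qed.

Lemma op_gWB i W : op (X i) W -> op gzoom (gWB i W).
Proof. intros HW p Hp; right; exists i, W; auto. Qed.

Lemma gVU_pi U p : gVU U p <-> U (gpi p).
Proof. destruct p; simpl; tauto. Qed.

Lemma gpi_cont : continuous gzoom B gpi.
Proof. intros U HU. eapply op_ext; [apply op_gVU, HU|]. apply gVU_pi. Qed.

Lemma gWB_gin i W x : gWB i W (gin i x) <-> W x.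
Proof.
  split; [intros [x' [Wx' E]]; apply gin_inj in E; subst; auto| intros Wx; exists x; auto].
Qed.

Lemma gslice_open i (O : gzoom -> Prop) : op gzoom O -> op (X i) (fun x => O (gin i x)).
Proof.
  intros HO. apply op_local. intros x Ox.
  destruct (HO _ Ox) as [[U [HU [Hp Hs]]] | [i' [W [HW [Hp Hs]]]]].
  - exists (fun _ => True); split; [apply op_full|split; auto].
  - destruct Hp as [x' [Wx' E]]. unfold gin in E. inversion E; subst i'.
    injection E as E; apply inj_pair2 in E; subst x'.
    exists W; split; auto; split; auto. intros y Wy; apply Hs; exists y; auto.
Qed.

Definition ghyp : Prop :=
  (forall b, (exists a, n a = b) \/ (exists i, j i = b)) /\
  (forall a i, n a <> j i) /\
  (forall a a', n a = n a' -> a = a') /\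
  (forall i i', j i = j i' -> i = i') /\
  (forall i, op B (fun b => b = j i)).

Definition gS (C : B -> Prop) (D : forall i, X i -> Prop) (p : gcar) : Prop :=
  match p with inl a => C (n a) | inr s => C (j (projT1 s)) /\ D (projT1 s) (projT2 s) end.


Lemma gcompact (H : ghyp) C D : compact_set B C -> (forall i, compact_set (X i) (D i)) ->
  compact_set gzoom (gS C D).
Proof.
  intros HC HD G HG Hcov.
  set (Hf := fun U : B -> Prop => op B U /\ exists l : list (gcar -> Prop),
     (forall O, In O l -> G O) /\ forall p, gVU U p -> gS C D p -> exists O, In O l /\ O p).
  destruct (HC Hf) as [lU [HlU1 HlU2]].
  - intros U [HU _]; auto.
  - intros b Cb. destruct (proj1 H b) as [[a <-]|[i <-]].
    + destruct (Hcov (inl a) Cb) as [O [GO Oa]].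
      destruct (HG O GO _ Oa) as [[U [HU [Hp Hs]]] | [i [W [_ [[x [_ E]] _]]]]]; [|discriminate].
      exists U; split; [split; auto; exists [O]; split|exact Hp].
      * intros O' [<-|[]]; auto.
      * intros p Up _; exists O; split; [left; auto| apply Hs; auto].
    + destruct (HD i (fun W => exists O, G O /\ W = (fun x => O (gin i x)))) as [lW [HlW1 HlW2]].
      * intros W [O [GO ->]]. apply gslice_open, HG, GO.
      * intros x Dx. destruct (Hcov (gin i x)) as [O [GO Ox]]. { simpl; auto. }
        exists (fun x => O (gin i x)); split; [exists O; auto| auto].
      * destruct (L_pull _ _ (fun _ => True) (fun W O => G O /\ W = fun x => O (gin i x)) lW) as [lO [HO1 HO2]].
        { intros W HW _; destruct (HlW1 W HW) as [O [GO E]]; exists O; auto. }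
        exists (fun b => b = j i); split; [split; [apply (proj2 (proj2 (proj2 (proj2 H))))|] | reflexivity].
        exists lO; split.
        -- intros O HO; destruct (HO1 O HO) as [W [_ [_ [GO _]]]]; auto.
        -- intros [a|[i' x]] Hp Hs; simpl in Hp.
           ++ exfalso; eapply (proj1 (proj2 H)); eauto.
           ++ apply (proj1 (proj2 (proj2 (proj2 H)))) in Hp; subst i'.
              destruct Hs as [_ Dx]. simpl in Dx. destruct (HlW2 x Dx) as [W [InW Wx]].
              destruct (HO2 W InW I) as [O [InO [GO ->]]]. exists O; split; auto.
  - destruct (L_pull _ _ Hf (fun U l => (forall O, In O l -> G O) /\
       forall p, gVU U p -> gS C D p -> exists O, In O l /\ O p) lU) as [LL [H1 H2]].
    { intros U _ [_ HU]; exact HU. }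
    exists (concat LL); split.
    + intros O HO; apply in_concat in HO; destruct HO as [l [Inl InO]].
      destruct (H1 l Inl) as [U [_ [_ [Hl _]]]]; auto.
    + intros p Sp. assert (Cp : C (gpi p)) by (destruct p; simpl in *; tauto).
      destruct (HlU2 _ Cp) as [U [InU Up]]. destruct (H2 U InU (HlU1 U InU)) as [l [Inl [_ Hl]]].
      destruct (Hl p (proj2 (gVU_pi U p) Up) Sp) as [O [InO Op]].
      exists O; split; auto. apply in_concat; eauto.
Qed.

Lemma inr_proj1 (i i' : Ix) (x : X i) (x' : X i') :
  inr (existT (fun k => pt (X k)) i x) = (inr (existT (fun k => pt (X k)) i' x') : gcar) -> i = i'.
Proof. intros E; inversion E; auto. Qed.

Lemma gT1 (H : ghyp) : tychonoff B -> (forall i, tychonoff (X i)) ->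
  forall p0 : gzoom, closed gzoom (fun z => z = p0).
Proof.
  intros [T1B _] HX p0. unfold closed. apply op_local. intros p np.
  destruct H as [Hc [Hd [Hn [Hj Hi]]]].
  destruct p as [a|[i x]], p0 as [a0|[i0 x0]].
  - exists (gVU (fun b => b <> n a0)); split; [apply op_gVU; apply T1B|split].
    + simpl; intros E; apply np; f_equal; apply Hn; auto.
    + intros q Hq E; subst q; simpl in Hq; auto.
  - exists (gVU (fun b => b <> j i0)); split; [apply op_gVU; apply T1B|split].
    + simpl; apply Hd.
    + intros q Hq E; subst q; simpl in Hq; auto.
  - exists (gWB i (fun _ => True)); split; [apply op_gWB, op_full|split].
    + exists x; auto.
    + intros q [x' [_ ->]] E; discriminate.
  - destruct (classic (i = i0)) as [<-|ni].
    + exists (gWB i (fun y => y <> x0)); split; [apply op_gWB; apply (proj1 (HX i))|split].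
      * exists x; split; auto. intros ->; apply np; auto.
      * intros q [x' [nx ->]] E. apply nx. apply gin_inj in E; auto.
    + exists (gWB i (fun _ => True)); split; [apply op_gWB, op_full|split].
      * exists x; auto.
      * intros q [x' [_ ->]] E. apply inr_proj1 in E; auto.
Qed.

Lemma slice_compl_open (H : ghyp) : tychonoff B -> forall i,
  op gzoom (fun q => ~ exists y, q = gin i y).
Proof.
  intros [T1B _] i. apply op_local. intros [a|[i' y']] nq.
  - exists (gVU (fun b => b <> j i)); split; [apply op_gVU; apply T1B|split].
    + simpl; apply (proj1 (proj2 H)).
    + intros q Hq [y ->]; simpl in Hq; auto.
  - assert (ni : i' <> i) by (intros ->; apply nq; exists y'; auto).
    exists (gWB i' (fun _ => True)); split; [apply op_gWB, op_full|split].
    + exists y'; auto.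
    + intros q [x' [_ ->]] [y E]. apply inr_proj1 in E; auto.
Qed.

Lemma gtych (H : ghyp) : tychonoff B -> (forall i, tychonoff (X i)) -> tychonoff gzoom.
Proof.
  intros TB TX. split; [apply gT1; auto|].
  intros C p HC nCp. destruct (HC p nCp) as [[U [HU [Up Hs]]] | [i [W [HW [Wp Hs]]]]].
  - destruct (proj2 TB (fun b => ~ U b) (gpi p)) as [g [cg [g0 [g1 g01]]]].
    + apply closed_compl; auto.
    + apply gVU_pi in Up; tauto.
    + exists (fun q => g (gpi q)). split; [|split; [auto|split]].
      * intros a b. apply (gpi_cont _ (cg a b)).
      * intros z Cz. apply g1. intros Uz. apply (Hs z); [apply gVU_pi; auto| auto].
      * intros; apply g01.
  - destruct Wp as [x [Wx ->]].
    destruct (proj2 (TX i) (fun y => ~ W y) x) as [g [cg [g0 [g1 g01]]]];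
      [apply closed_compl; auto| tauto|].
    set (f := fun q : gcar => match excluded_middle_informative (exists y, q = gin i y) with
                | left Hq => g (proj1_sig (constructive_indefinite_description _ Hq))
                | right _ => 1%R end).
    assert (Hf : forall q, (forall y, q = gin i y -> f q = g y) /\ ((~ exists y, q = gin i y) -> f q = 1%R)).
    { intros q; unfold f; destruct (excluded_middle_informative _) as [Hq|Hq].
      - destruct (constructive_indefinite_description _ Hq) as [y' E']; simpl; split.
        + intros y E. rewrite E' in E. apply gin_inj in E. subst; auto.
        + intros c; exfalso; eauto.
      - split; [intros y E; exfalso; eauto| auto]. }
    assert (Hg : forall y, f (inr (existT (fun k => pt (X k)) i y)) = g y)
      by (intros y; exact (proj1 (Hf (gin i y)) y eq_refl)).
    assert (Hg' : forall y, f (gin i y) = g y) by exact Hg.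
    exists f; split; [|split; [|split]].
    + intros a b. apply op_local. intros q Hq.
      destruct (classic (exists y, q = gin i y)) as [[y ->]|nq].
      * exists (gWB i (fun y => (a < g y < b)%R)); split; [apply op_gWB, cg|split].
        -- exists y; split; auto. first [rewrite Hg in Hq|rewrite Hg' in Hq]; auto.
        -- intros q' [y' [Hy' ->]]. first [rewrite Hg|rewrite Hg']; auto.
      * exists (fun q => ~ exists y, q = gin i y); split; [apply slice_compl_open; auto|split; auto].
        intros q' nq'. rewrite (proj2 (Hf q') nq'). rewrite (proj2 (Hf q) nq) in Hq; auto.
    + first [rewrite Hg|rewrite Hg']; auto.
    + intros z Cz. destruct (classic (exists y, z = gin i y)) as [[y ->]|nz].
      * first [rewrite Hg|rewrite Hg']. apply g1. intros Wy. apply (Hs (gin i y)); auto.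
        exists y; auto.
      * apply (proj2 (Hf z) nz).
    + intros z. destruct (classic (exists y, z = gin i y)) as [[y ->]|nz].
      * first [rewrite Hg|rewrite Hg']; auto.
      * rewrite (proj2 (Hf z) nz); split; [apply Rle_0_1| apply Rle_refl].
Qed.

End GZ.


Definition zg (Y : space) (X : Iso Y -> space) : space :=
  gzoom Y (NIso Y) (fun a => proj1_sig a) (Iso Y) (fun i => proj1_sig i) X.

Lemma zoom_zg Y X : zoom Y X = zg Y X.
Proof.
  unfold zoom, zg, gzoom. f_equal; apply proof_irrelevance.
Qed.

Lemma zg_hyp Y : ghyp Y (NIso Y) (fun a => proj1_sig a) (Iso Y) (fun i => proj1_sig i).
Proof.
  split; [|split; [|split; [|split]]].
  - intros b. destruct (classic (isolated Y b)) as [h|h].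
    + right; exists (exist _ b h); auto.
    + left; exists (exist _ b h); auto.
  - intros [a ha] [i hi]; simpl; intros ->; auto.
  - intros a a'; apply sig_eq.
  - intros i i'; apply sig_eq.
  - intros [i hi]; exact hi.
Qed.

Lemma union_compact (X : space) (A1 A2 : X -> Prop) :
  compact_set X A1 -> compact_set X A2 -> compact_set X (fun x => A1 x \/ A2 x).
Proof.
  intros H1 H2 F HF Hc.
  destruct (H1 F HF) as [l1 [Hl1 Hl1']]; [intros x Ax; apply Hc; auto|].
  destruct (H2 F HF) as [l2 [Hl2 Hl2']]; [intros x Ax; apply Hc; auto|].
  exists (l1 ++ l2); split.
  - intros U HU; apply in_app_or in HU; destruct HU; auto.
  - intros x [Ax|Ax]; [destruct (Hl1' x Ax) as [U [? ?]]|destruct (Hl2' x Ax) as [U [? ?]]];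
      exists U; split; auto; apply in_or_app; auto.
Qed.

Definition cumul {T : Type} (A : nat -> T -> Prop) (k : nat) (x : T) : Prop :=
  exists m, (m <= k)%nat /\ A m x.

Lemma cumul_compact (X : space) (A : nat -> X -> Prop) :
  (forall m, compact_set X (A m)) -> forall k, compact_set X (cumul A k).
Proof.
  intros H k; induction k.
  - apply compact_ext with (A 0%nat); [|auto].
    intros x; split; [intros Ax; exists 0%nat; auto| intros [m [Hm Am]]].
    assert (m = 0%nat) by (inversion Hm; auto). subst; auto.
  - apply compact_ext with (fun x => cumul A k x \/ A (S k) x); [|apply union_compact; auto].
    intros x; split.
    + intros [[m [Hm Am]]|Ax]; [exists m; split; auto| exists (S k); auto].
    + intros [m [Hm Am]]. inversion Hm; subst; [right; auto| left; exists m; auto].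
Qed.

Lemma cumul_mono {T : Type} (A : nat -> T -> Prop) k k' x :
  (k <= k')%nat -> cumul A k x -> cumul A k' x.
Proof. intros Hk [m [Hm Am]]; exists m; split; auto; eapply PeanoNat.Nat.le_trans; eauto. Qed.

Section ZoomFacts.
Variable Y : space.
Variable X : Iso Y -> space.
Hypothesis HY : tychonoff Y.
Hypothesis HX : forall i, tychonoff (X i).
Variable x0 : forall i, pt (X i).

Definition sY (y : Y) : zg Y X :=
  match excluded_middle_informative (isolated Y y) with
  | left h => gin _ _ _ (exist _ y h) (x0 (exist _ y h))
  | right h => inl (exist _ y h)
  end.

Lemma sY_pi y : gpi Y (NIso Y) (fun a => proj1_sig a) (Iso Y) (fun i => proj1_sig i) X (sY y) = y.
Proof. unfold sY; destruct (excluded_middle_informative _); reflexivity. Qed.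

Lemma sY_iso i : sY (proj1_sig i) = gin _ _ _ i (x0 i).
Proof.
  unfold sY; destruct (excluded_middle_informative _) as [h|h].
  - assert (E : exist _ (proj1_sig i) h = i) by (apply sig_eq; auto). rewrite E; auto.
  - exfalso; apply h, (proj2_sig i).
Qed.

Lemma sY_niso a : sY (proj1_sig a) = inl a.
Proof.
  unfold sY; destruct (excluded_middle_informative _) as [h|h].
  - exfalso; apply (proj2_sig a), h.
  - f_equal; apply sig_eq; auto.
Qed.

Lemma sY_emb : embedding Y (zg Y X) sY.
Proof.
  split; [|split].
  - intros y y' E. rewrite <- (sY_pi y), <- (sY_pi y'), E; auto.
  - intros O HO. apply op_local. intros y Oy.
    destruct (HO _ Oy) as [[U [HU [Hp Hs]]] | [i [W [HW [Hp Hs]]]]].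
    + exists U; split; auto; split.
      * apply gVU_pi in Hp; rewrite sY_pi in Hp; auto.
      * intros y' Uy'; apply Hs; apply gVU_pi; rewrite sY_pi; auto.
    + destruct Hp as [x [_ E]]. unfold sY in E. destruct (excluded_middle_informative _) as [h|h];
        [|discriminate].
      exists (fun z => z = y); split; [exact h|split; auto]. intros y' ->; auto.
  - intros U HU. exists (gVU _ _ (fun a => proj1_sig a) _ (fun i => proj1_sig i) X U); split.
    + apply op_gVU; auto.
    + intros y; rewrite gVU_pi, sY_pi; tauto.
Qed.

Lemma sY_closed : closed (zg Y X) (image sY).
Proof.
  unfold closed. apply op_local. intros [a|[i x]] np.
  - exfalso; apply np; exists (proj1_sig a); apply sY_niso.
  - assert (nx : x <> x0 i) by (intros ->; apply np; exists (proj1_sig i); apply sY_iso).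
    exists (gWB _ _ X i (fun y => y <> x0 i)); split; [apply op_gWB; apply (proj1 (HX i))|split].
    + exists x; auto.
    + intros q [x' [nx' ->]] [y E].
      assert (Ey : y = proj1_sig i).
      { pose proof (sY_pi y) as P. rewrite E in P. simpl in P. auto. }
      subst y. rewrite sY_iso in E. apply gin_inj in E. auto.
Qed.

Lemma gin_emb i : embedding (X i) (zg Y X) (gin _ _ _ i).
Proof.
  split; [|split].
  - intros a b; apply gin_inj.
  - intros O HO; apply gslice_open; auto.
  - intros W HW; exists (gWB _ _ X i W); split; [apply op_gWB; auto|].
    intros x; rewrite gWB_gin; tauto.
Qed.

Lemma gin_closed i : closed (zg Y X) (image (gin _ _ _ i)).
Proof.
  unfold closed. eapply op_ext; [apply (slice_compl_open _ _ _ _ _ X (zg_hyp Y) HY i)|].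
  intros q; unfold image; split; intros H [y E]; apply H; exists y; auto.
Qed.

End ZoomFacts.


Definition u1 (m : nat) : nat := fst (Cantor.of_nat m).
Definition u2 (m : nat) : nat := snd (Cantor.of_nat m).

Lemma map_u1 (a b : nat -> nat) l : map u1 (map (fun m => Cantor.to_nat (a m, b m)) l) = map a l.
Proof. rewrite map_map; apply map_ext; intros m; unfold u1; rewrite Cantor.cancel_of_to; auto. Qed.
Lemma map_u2 (a b : nat -> nat) l : map u2 (map (fun m => Cantor.to_nat (a m, b m)) l) = map b l.
Proof. rewrite map_map; apply map_ext; intros m; unfold u2; rewrite Cantor.cancel_of_to; auto. Qed.

Lemma K_choice (Ix : Type) (X : Ix -> space) : (forall i, K_analytic (X i)) ->
  exists (Kf : Ix -> space) (ef : forall i, X i -> Kf i) (Ff : forall i, list nat -> Kf i -> Prop),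
    forall i, tychonoff (Kf i) /\ compact_space (Kf i) /\ embedding (X i) (Kf i) (ef i) /\
      (forall s, closed (Kf i) (Ff i s)) /\
      (forall z, (exists x, ef i x = z) <-> exists sigma : nat -> nat, forall k, Ff i (map sigma (seq 0 (S k))) z).
Proof.
  intros H.
  set (c1 := fun i => constructive_indefinite_description _ (H i)).
  set (c2 := fun i => constructive_indefinite_description _ (proj2_sig (c1 i))).
  set (c3 := fun i => constructive_indefinite_description _ (proj2_sig (c2 i))).
  exists (fun i => proj1_sig (c1 i)), (fun i => proj1_sig (c2 i)), (fun i => proj1_sig (c3 i)).
  intros i. exact (proj2_sig (c3 i)).
Qed.

Section KC.
Variable Y : space.
Variable X : Iso Y -> space.
Variable KY : space.
Variable eY : Y -> KY.
Variable A : list nat -> KY -> Prop.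
Hypothesis TKY : tychonoff KY.
Hypothesis CKY : compact_space KY.
Hypothesis embY : embedding Y KY eY.
Hypothesis HA : forall s, closed KY (A s).
Hypothesis HSY : forall z : KY, (exists x, eY x = z) <-> exists sigma : nat -> nat, forall k, A (map sigma (seq 0 (S k))) z.
Variable Kf : Iso Y -> space.
Variable ef : forall i, X i -> Kf i.
Variable Ff : forall i, list nat -> Kf i -> Prop.
Hypothesis HKf : forall i, tychonoff (Kf i) /\ compact_space (Kf i) /\ embedding (X i) (Kf i) (ef i) /\
      (forall s, closed (Kf i) (Ff i s)) /\
      (forall z, (exists x, ef i x = z) <-> exists sigma : nat -> nat, forall k, Ff i (map sigma (seq 0 (S k))) z).

Definition PP (k : KY) : Prop := ~ exists (i : Iso Y) V, op KY V /\ (forall y, y = proj1_sig i <-> V (eY y)) /\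
   V k /\ k <> eY (proj1_sig i).

Lemma PP_closed : closed KY PP.
Proof.
  unfold closed. apply op_ext with (fun k => exists (i : Iso Y) V, op KY V /\ (forall y, y = proj1_sig i <-> V (eY y)) /\
   V k /\ k <> eY (proj1_sig i)).
  - apply op_local. intros k [i [V [HV [E [Vk nk]]]]].
    exists (fun k' => V k' /\ k' <> eY (proj1_sig i)); split; [apply op_inter; [auto| apply (proj1 TKY)]|split; auto].
    intros k' [Vk' nk']; exists i, V; auto.
  - intros k; unfold PP; split; [tauto| apply NNPP].
Qed.

Lemma PP_eY y : PP (eY y).
Proof. intros [i [V [HV [E [Vk nk]]]]]. apply E in Vk. subst; auto. Qed.

Definition SS : space := subsp KY PP.
Definition e' (y : Y) : SS := exist _ (eY y) (PP_eY y).

Lemma e'_emb : embedding Y SS e'.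
Proof.
  destruct embY as [iY [cY tY]]. split; [|split].
  - intros a b E. apply iY. apply (f_equal (@proj1_sig _ _)) in E; auto.
  - intros V' [V [HV E]]. eapply op_ext; [apply (cY _ HV)|]. intros y; rewrite (E (e' y)); tauto.
  - intros U HU. destruct (tY U HU) as [V [HV E]]. exists (fun p : SS => V (proj1_sig p)); split; auto.
    exists V; split; auto; tauto.
Qed.

Definition jS (i : Iso Y) : SS := e' (proj1_sig i).
Definition NL : Type := {b : SS | ~ exists i : Iso Y, jS i = b}.
Definition nL (a : NL) : SS := proj1_sig a.
Definition LL : space := gzoom SS NL nL (Iso Y) jS Kf.

Lemma LL_hyp : ghyp SS NL nL (Iso Y) jS.
Proof.
  split; [|split; [|split; [|split]]].
  - intros b. destruct (classic (exists i, jS i = b)) as [h|h]; [right; auto| left; exists (exist _ b h); auto].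
  - intros [b h] i; simpl; intros ->; apply h; exists i; auto.
  - intros a a'; apply sig_eq.
  - intros i i' E. apply (proj1 e'_emb) in E. apply sig_eq; auto.
  - intros i. destruct (proj2 (proj2 embY) (fun y => y = proj1_sig i) (proj2_sig i)) as [V [HV E]].
    exists V; split; auto. intros [k Pk]; split.
    + intros Ek. apply (f_equal (@proj1_sig _ _)) in Ek. simpl in Ek. subst k. apply E; auto.
    + intros Vk. apply sig_eq. simpl. destruct (classic (k = eY (proj1_sig i))) as [h|h]; auto.
      exfalso; apply Pk; exists i, V; auto.
Qed.

Lemma LL_tych : tychonoff LL.
Proof. apply gtych; [apply LL_hyp| apply sub_tychonoff; auto| intros i; apply (HKf i)]. Qed.

Lemma LL_compact : compact_space LL.
Proof.
  unfold compact_space.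
  apply compact_ext with (gS SS NL nL (Iso Y) jS Kf (fun _ => True) (fun _ _ => True)).
  - intros [a|[i x]]; simpl; tauto.
  - apply gcompact; [apply LL_hyp| apply sub_compact; [auto| apply PP_closed]| intros i; apply (HKf i)].
Qed.

Lemma nimg (a : NIso Y) : ~ exists i, jS i = e' (proj1_sig a).
Proof.
  intros [i E]. apply (proj1 e'_emb) in E. apply (proj2_sig a). rewrite <- E. apply (proj2_sig i).
Qed.

Definition eL (p : zg Y X) : LL :=
  match p with
  | inl a => inl (exist _ (e' (proj1_sig a)) (nimg a))
  | inr s => inr (existT (fun k => pt (Kf k)) (projT1 s) (ef _ (projT2 s)))
  end.


Lemma eL_emb : embedding (zg Y X) LL eL.
Proof.
  split; [|split].
  - intros [a|[i x]] [a'|[i' x']] E; simpl in E; try discriminate.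
    + injection E as E. apply (proj1 embY) in E. f_equal; apply sig_eq; auto.
    + injection E as Ei E. subst i'.
      apply inj_pair2 in E. apply (proj1 (proj2 (proj2 (HKf i)))) in E. subst; auto.
  - intros O HO. apply op_local. intros z Oz.
    destruct (HO _ Oz) as [[U [HU [Hp Hs]]] | [i [W [HW [Hp Hs]]]]].
    + exists (gVU Y (NIso Y) (fun a => proj1_sig a) (Iso Y) (fun i => proj1_sig i) X (fun y => U (e' y))).
      split; [apply op_gVU; apply (proj1 (proj2 e'_emb)); auto|split].
      * destruct z as [a|[i x]]; simpl in *; auto.
      * intros q Hq; apply Hs; destruct q as [a|[i x]]; simpl in *; auto.
    + destruct Hp as [w [Ww E]]. destruct z as [a|[i' x]]; [discriminate|]. simpl in E.
      injection E as Ei E. subst i'.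
      apply inj_pair2 in E. subst w.
      exists (gWB _ _ X i (fun x => W (ef i x))); split;
        [apply op_gWB; apply (proj1 (proj2 (proj1 (proj2 (proj2 (HKf i)))))); auto|split].
      * exists x; auto.
      * intros q [x'' [Wx'' ->]]; apply Hs; exists (ef i x''); auto.
  - intros U HU. apply transfer_local. intros z Uz.
    destruct (HU _ Uz) as [[U' [HU' [Hp Hs]]] | [i [W [HW [Hp Hs]]]]].
    + destruct (proj2 (proj2 e'_emb) U' HU') as [U'' [HU'' E]].
      exists (gVU SS NL nL (Iso Y) jS Kf U''); split; [apply op_gVU; auto|split].
      * destruct z as [a|[i x]]; simpl in *; apply E; auto.
      * intros z' Hz'; apply Hs; destruct z' as [a|[i x]]; simpl in *; apply E; auto.
    + destruct (proj2 (proj2 (proj1 (proj2 (proj2 (HKf i))))) W HW) as [W'' [HW'' E]].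
      exists (gWB _ _ Kf i W''); split; [apply op_gWB; auto|split].
      * destruct Hp as [x [Wx ->]]. exists (ef i x); split; [apply E; auto| reflexivity].
      * intros [a|[i' x']] [x'' [Wx'' Ex]]; simpl in Ex; [discriminate|].
        injection Ex as Ei Ex. subst i'.
        apply inj_pair2 in Ex. subst x''. apply Hs. exists x'; split; auto. apply E; auto.
Qed.

Definition FL (s : list nat) (p : LL) : Prop :=
  match p with
  | inl b => A (map u1 s) (proj1_sig (proj1_sig b))
  | inr t => A (map u1 s) (eY (proj1_sig (projT1 t))) /\ Ff (projT1 t) (map u2 s) (projT2 t)
  end.

Lemma FL_closed s : closed LL (FL s).
Proof.
  unfold closed. apply op_local. intros p np.
  assert (HU : op SS (fun q : SS => ~ A (map u1 s) (proj1_sig q))).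
  { exists (fun k => ~ A (map u1 s) k); split; [apply HA| tauto]. }
  destruct p as [b|[i k]]; simpl in np.
  - exists (gVU SS NL nL (Iso Y) jS Kf (fun q : SS => ~ A (map u1 s) (proj1_sig q))); split;
      [apply op_gVU; auto|split].
    + simpl; auto.
    + intros q Hq; destruct q as [a|[i x]]; simpl in *; tauto.
  - destruct (classic (A (map u1 s) (eY (proj1_sig i)))) as [Ha|Ha].
    + exists (gWB _ _ Kf i (fun k => ~ Ff i (map u2 s) k)); split;
        [apply op_gWB; apply (proj1 (proj2 (proj2 (proj2 (HKf i)))))|split].
      * exists k; split; [tauto|auto].
      * intros q [k' [nF ->]]; simpl; tauto.
    + exists (gVU SS NL nL (Iso Y) jS Kf (fun q : SS => ~ A (map u1 s) (proj1_sig q))); split;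
        [apply op_gVU; auto|split].
      * simpl; auto.
      * intros q Hq; destruct q as [a|[i' x]]; simpl in *; tauto.
Qed.

Lemma FL_suslin (p : LL) : (exists z, eL z = p) <->
  exists sigma : nat -> nat, forall k, FL (map sigma (seq 0 (S k))) p.
Proof.
  split.
  - intros [z <-]. destruct z as [a|[i x]].
    + destruct (proj1 (HSY (eY (proj1_sig a))) (ex_intro _ _ eq_refl)) as [s1 Hs1].
      exists (fun m => Cantor.to_nat (s1 m, 0%nat)); intros k; unfold FL, eL.
      rewrite (map_u1 s1 (fun _ => 0%nat)). apply Hs1.
    + destruct (proj1 (HSY (eY (proj1_sig i))) (ex_intro _ _ eq_refl)) as [s1 Hs1].
      destruct (proj1 (proj2 (proj2 (proj2 (proj2 (HKf i)))) (ef i x)) (ex_intro _ _ eq_refl)) as [s2 Hs2].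
      exists (fun m => Cantor.to_nat (s1 m, s2 m)); intros k; unfold FL, eL.
      rewrite (map_u1 s1 s2), (map_u2 s1 s2). split; [apply Hs1| apply Hs2].
  - intros [sg Hsg]. destruct p as [b|[i k]].
    + destruct (proj2 (HSY (proj1_sig (proj1_sig b)))) as [y Ey].
      { exists (fun m => u1 (sg m)); intros k. specialize (Hsg k); unfold FL in Hsg. rewrite map_map in Hsg; auto. }
      destruct (classic (isolated Y y)) as [h|h].
      * exfalso. apply (proj2_sig b). exists (exist _ y h). apply sig_eq. simpl. auto.
      * exists (inl (exist _ y h)). simpl. f_equal. apply sig_eq. simpl. apply sig_eq. simpl. auto.
    + destruct (proj2 (proj2 (proj2 (proj2 (proj2 (HKf i)))) k)) as [x Ex].
      { exists (fun m => u2 (sg m)); intros k'. specialize (Hsg k'); unfold FL in Hsg. rewrite !map_map in Hsg; cbn [projT1 projT2] in Hsg; tauto. }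
      exists (inr (existT _ i x)). simpl. rewrite Ex. auto.
Qed.

End KC.

Lemma Kconv (Y : space) (X : Iso Y -> space) :
  K_analytic Y -> (forall i, K_analytic (X i)) -> K_analytic (zg Y X).
Proof.
  intros [KY [eY [A [TKY [CKY [embY [HA HSY]]]]]]] HXK.
  destruct (K_choice _ X HXK) as [Kf [ef [Ff HKf]]].
  exists (LL Y KY eY Kf), (eL Y X KY eY embY Kf ef), (FL Y KY eY A Kf Ff).
  split; [apply (LL_tych Y X KY eY TKY embY Kf ef Ff HKf)|split;
     [apply (LL_compact Y X KY eY TKY CKY embY Kf ef Ff HKf)|split; [apply (eL_emb Y X KY eY embY Kf ef Ff HKf)|split]]].
  - intros s; apply (FL_closed Y X KY eY A HA Kf ef Ff HKf).
  - intros z; apply (FL_suslin Y X KY eY A embY HSY Kf ef Ff HKf).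
Qed.


Theorem corollary4p5 (Y : space) (X : Iso Y -> space)
  (HY : tychonoff Y) (HX : forall i, tychonoff (X i))
  (Hne : forall i, inhabited (pt (X i))) :
  (compact_space (zoom Y X) <-> compact_space Y /\ (forall i, compact_space (X i))) /\
  (sigma_compact (zoom Y X) <-> sigma_compact Y /\ (forall i, sigma_compact (X i))) /\
  (K_analytic (zoom Y X) <-> K_analytic Y /\ (forall i, K_analytic (X i))).
Proof.
  rewrite (zoom_zg Y X).
  assert (Hx : forall i, exists x : X i, True) by (intros i; destruct (Hne i) as [x]; exists x; auto).
  pose (x0 := fun i => proj1_sig (constructive_indefinite_description _ (Hx i))).
  pose proof (sY_emb Y X x0) as Hs1. pose proof (sY_closed Y X HX x0) as Hs2.
  pose proof (gin_emb Y X) as Hg1. pose proof (gin_closed Y X HY) as Hg2.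
  split; [|split].
  - split.
    + intros H. split.
      * unfold compact_space. apply compact_ext with (fun y => (fun _ : zg Y X => True) (sY Y X x0 y)); [tauto|].
        exact (emb_cpt _ _ _ _ Hs1 Hs2 H).
      * intros i. unfold compact_space.
        apply compact_ext with (fun y => (fun _ : zg Y X => True) (gin _ _ X i y)); [tauto|].
        exact (emb_cpt _ _ _ _ (Hg1 i) (Hg2 i) H).
    + intros [HcY HcX]. unfold compact_space.
      apply compact_ext with (gS Y (NIso Y) (fun a => proj1_sig a) (Iso Y) (fun i => proj1_sig i) X
        (fun _ => True) (fun _ _ => True)).
      * intros [a|[i x]]; simpl; tauto.
      * apply gcompact; [apply zg_hyp| auto| auto].
  - split.
    + intros [K [HK Hc]]. split.
      * exists (fun m y => K m (sY Y X x0 y)); split; [intros m; exact (emb_cpt _ _ _ _ Hs1 Hs2 (HK m))| intros y; apply Hc].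
      * intros i. exists (fun m y => K m (gin _ _ X i y)); split; [intros m; exact (emb_cpt _ _ _ _ (Hg1 i) (Hg2 i) (HK m))| intros y; apply Hc].
    + intros [[K [HK Hc]] HXs].
      pose (Df := fun i => proj1_sig (constructive_indefinite_description _ (HXs i))).
      assert (HDf : forall i, (forall m, compact_set (X i) (Df i m)) /\ (forall x, exists m, Df i m x))
        by (intros i; exact (proj2_sig (constructive_indefinite_description _ (HXs i)))).
      exists (fun m => gS Y (NIso Y) (fun a => proj1_sig a) (Iso Y) (fun i => proj1_sig i) X
        (cumul K m) (fun i => cumul (Df i) m)); split.
      * intros m. apply gcompact; [apply zg_hyp| apply cumul_compact; auto| intros i; apply cumul_compact, HDf].
      * intros [a|[i x]].
        -- destruct (Hc (proj1_sig a)) as [m Hm]. exists m; simpl. exists m; auto.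
        -- destruct (Hc (proj1_sig i)) as [m1 Hm1]. destruct (proj2 (HDf i) x) as [m2 Hm2].
           exists (m1 + m2)%nat; simpl; split.
           ++ exists m1; split; auto. apply PeanoNat.Nat.le_add_r.
           ++ exists m2; split; auto. rewrite PeanoNat.Nat.add_comm. apply PeanoNat.Nat.le_add_r.
  - split.
    + intros H; split; [|intros i]; eapply emb_Kan; eauto.
    + intros [H1 H2]; apply Kconv; auto.
Qed.
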